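(* There is an absolute constant $c>0$ such that for every odd $n$, every mapping $\phi$ from ${\sf XOR}$ to ${\sf Majority}$ on $\{0,1\}^n$, and every $i\in[n]$, we have $\mathbb{E}_{x}[{\sf dist}(\phi(x),\phi(x+e_i))]\ge c\sqrt{n}$, where $x$ is uniform in $\{0,1\}^n$.
   Context: ${\sf XOR}(x)=\sum_i x_i \bmod 2$; ${\sf Majority}(x)=1$ iff $\sum_i x_i>n/2$. A mapping from $f$ to $g$ is a bijection $\phi$ of $\{0,1\}^n$ with $f(z)=g(\phi(z))$ for all $z$. $e_i$ is the $i$-th unit vector, addition mod 2, ${\sf dist}$ Hamming distance. *)

(* Defs.v *)
From mathcomp Require Import all_boot all_order all_fingroup all_algebra.
Set Implicit Arguments. Unset Strict Implicit. Unset Printing Implicit Defensive.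

Notation cube n := {ffun 'I_n -> bool}.

Definition wt n (x : cube n) : nat := #|[set j | x j]|.

Definition XOR n (x : cube n) : bool := odd (wt x).
Definition Majority n (x : cube n) : bool := n < 2 * wt x.

Definition flip n (x : cube n) (i : 'I_n) : cube n := [ffun j => x j (+) (j == i)].

Definition dist n (x y : cube n) : nat := #|[set j | x j != y j]|.

Definition is_mapping n (f g : cube n -> bool) (phi : {perm cube n}) : Prop :=
  forall z, f z = g (phi z).

Definition avg_stretch n (phi : {perm cube n}) (i : 'I_n) : rat :=
  ((\sum_(x : cube n) dist (phi x) (phi (flip x i)))%:R / (2 ^ n)%:R)%R.

(* Main.v *)
Require Import Defs.
From mathcomp Require Import all_boot all_order all_fingroup all_algebra.
From mathcomp Require Import zify ring lra.
Import GRing.Theory Num.Theory.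


Definition hh (n k : nat) : nat := (2 * k - n) + (n - 2 * k).

Lemma stepA m j : (j.+1 <= m)%N ->
  'C(m.*2.+1, j.+1) * hh m.*2.+1 j.+1 + m.*2.+1 * 'C(m.*2, j) = m.*2.+1 * 'C(m.*2, j.+1).
Proof.
move=> hj.
have e1 := mul_bin_diag m.*2.+1 j. have e2 := mul_bin_down m.*2.+1 j.+1.
rewrite /= in e1 e2. rewrite /hh. nia.
Qed.

Lemma stepB m j : (m <= j)%N -> (j < m.*2.+1)%N ->
  'C(m.*2.+1, j.+1) * hh m.*2.+1 j.+1 + m.*2.+1 * 'C(m.*2, j.+1) = m.*2.+1 * 'C(m.*2, j).
Proof.
move=> hj hj2.
have e1 := mul_bin_diag m.*2.+1 j. have e2 := mul_bin_down m.*2.+1 j.+1.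
rewrite /= in e1 e2. rewrite /hh.
have -> : (2 * j.+1 - m.*2.+1 = j.+1 - (m.*2.+1 - j.+1))%N by lia.
have -> : (m.*2.+1 - 2 * j.+1 = 0)%N by lia.
rewrite addn0 e2 e1 mulnBr [X in _ = X]mulnC [_ * 'C(_,_)]mulnC subnK // leq_mul2l; lia.
Qed.

Lemma sumA m j : (j <= m)%N ->
  \sum_(k < j.+1) 'C(m.*2.+1, k) * hh m.*2.+1 k = m.*2.+1 * 'C(m.*2, j).
Proof.
elim: j => [|j IH] hj.
  rewrite big_ord_recr big_ord0 /= /hh !bin0. lia.
rewrite big_ord_recr /= IH ?(ltnW hj) //. rewrite -stepA //. lia.
Qed.

Lemma sumB m t : (m + t <= m.*2.+1)%N ->
  \sum_(k < (m + t).+1) 'C(m.*2.+1, k) * hh m.*2.+1 k + m.*2.+1 * 'C(m.*2, m + t)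
  = 2 * (m.*2.+1 * 'C(m.*2, m)).
Proof.
elim: t => [|t IH] ht.
  rewrite addn0 sumA //. lia.
rewrite addnS big_ord_recr /=.
have := @stepB m (m+t) (leq_addr t m) (ltac:(lia) : (m+t < m.*2.+1)%N). have := IH ltac:(lia). move=> h1 h2; rewrite -addnA h2; exact: h1.
Qed.

Lemma sumH m : \sum_(k < m.*2.+2) 'C(m.*2.+1, k) * hh m.*2.+1 k = 2 * (m.*2.+1 * 'C(m.*2, m)).
Proof.
have := @sumB m m.+1. rewrite addnS -addnn bin_small; last by lia.
rewrite muln0 addn0 => ->; lia.
Qed.

Lemma binbound m : (16 ^ m <= 'C(m.*2, m) ^ 2 * (4 * m + 1))%N.
Proof.
elim: m => [|m IH] //.
have e := mul_bin_diag m.*2.+2 m. rewrite /= in e.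
have e2 : 'C(m.*2.+2, m.+1) = 'C(m.*2.+1, m.+1) + 'C(m.*2.+1, m) by [].
have e3 := mul_bin_diag m.*2.+1 m. rewrite /= in e3.
have e4 := mul_bin_down m.*2.+1 m.
rewrite /= in e4.
have k : (m.+1 * 'C(m.*2.+2, m.+1) = 2 * (m.*2.+1 * 'C(m.*2, m)))%N.
  rewrite e2 mulnDr -e3. nia.
set C := 'C(m.*2, m) in IH k *. set D := 'C(m.*2.+2, m.+1) in k *.
rewrite -(@leq_pmul2r (m.+1 ^ 2)) ?expn_gt0 //.
have -> : (D ^ 2 * (4 * m.+1 + 1) * m.+1 ^ 2 = (m.+1 * D) ^ 2 * (4 * m + 5))%N.
  rewrite expnMn. ring.
rewrite k.
have h1 : (16 ^ m.+1 * m.+1 ^ 2 <= 16 * (C ^ 2 * (4 * m + 1)) * m.+1 ^ 2)%N.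
  by rewrite expnS; apply: leq_mul => //; apply: leq_mul.
apply: (leq_trans h1).
have h2 : (16 * (4 * m + 1) * m.+1 ^ 2 <= 4 * m.*2.+1 ^ 2 * (4 * m + 5))%N.
  rewrite -!mul2n. nia.
have -> : (16 * (C ^ 2 * (4 * m + 1)) * m.+1 ^ 2 = C ^ 2 * (16 * (4 * m + 1) * m.+1 ^ 2))%N by ring.
have -> : ((2 * (m.*2.+1 * C)) ^ 2 * (4 * m + 5) = C ^ 2 * (4 * m.*2.+1 ^ 2 * (4 * m + 5)))%N by rewrite !expnMn; ring.
by rewrite leq_mul2l h2 orbT.
Qed.

Set Implicit Arguments. Unset Strict Implicit. Unset Printing Implicit Defensive.

Lemma wt_le n (x : cube n) : (wt x <= n)%N.
Proof. by rewrite /wt; apply: leq_trans (max_card _) _; rewrite card_ord. Qed.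

Definition ofset n (A : {set 'I_n}) : cube n := [ffun j => j \in A].

Lemma wt_ofset n A : wt (@ofset n A) = #|A|.
Proof. by rewrite /wt; apply: eq_card => j; rewrite inE ffunE. Qed.

Lemma card_wt n k : #|[pred y : cube n | wt y == k]| = 'C(n, k).
Proof.
have inj : injective (@ofset n).
  move=> A B /ffunP e; apply/setP=> j; have := e j; rewrite !ffunE //.
have H : [pred y : cube n | wt y == k] =i [set ofset A | A in [set A : {set 'I_n} | #|A| == k]].
  move=> y; rewrite !inE; apply/idP/imsetP.
    move=> hy; exists [set j | y j]; first by rewrite inE.
    by apply/ffunP=> j; rewrite ffunE inE.
  by case=> A; rewrite inE => hA ->; rewrite wt_ofset.
by rewrite (eq_card H) card_imset // card_draws card_ord.
Qed.

Lemma sum_cube n (F : nat -> nat) :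
  \sum_(y : cube n) F (wt y) = \sum_(k < n.+1) 'C(n, k) * F k.
Proof.
transitivity (\sum_(y : cube n) \sum_(k < n.+1) (wt y == k) * F k).
  apply: eq_bigr => y _.
  rewrite (bigD1 (Ordinal (wt_le y : (wt y < n.+1)%N))) //= eqxx mul1n big1 ?addn0 //.
  move=> k hk; case: eqP => // e; exfalso; move: hk; apply/negP; rewrite negbK.
  by apply/eqP/val_inj; rewrite /= e.
rewrite exchange_big /=; apply: eq_bigr => k _.
rewrite -big_distrl /= -card_wt -sum1_card.
congr (_ * _); rewrite [RHS]big_mkcond; apply: eq_bigr => y _; rewrite inE; by case: (wt y == k).
Qed.

Lemma wt_dist n (a b : cube n) : (wt a <= wt b + dist a b)%N.
Proof.
rewrite /wt /dist.
apply: leq_trans (leq_card_setU _ _).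
apply: subset_leq_card; apply/subsetP=> j; rewrite !inE.
by case: (a j); case: (b j).
Qed.

Lemma dist_sym n (a b : cube n) : dist a b = dist b a.
Proof. by rewrite /dist; apply: eq_card => j; rewrite !inE eq_sym. Qed.

Lemma xor_flip n (x : cube n) i : XOR (flip x i) = ~~ XOR x.
Proof.
rewrite /XOR /wt.
have e : [set j | flip x i j] = if x i then [set j | x j] :\ i else i |: [set j | x j].
  apply/setP=> j; rewrite /flip !inE ffunE.
  case: (eqVneq j i) => [->|hj]; case hi: (x i); rewrite /= ?inE ?eqxx ?hi ?(negbTE hj) ?addbF ?addbT //=.
rewrite e; case: (boolP (x i)) => hi.
  have h := cardsD1 i [set j | x j]; rewrite inE hi in h.
  by rewrite h /= negbK.
have h := cardsU1 i [set j | x j]; rewrite inE hi in h.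
by rewrite h.
Qed.

Lemma flip_inj n i : injective (fun x : cube n => flip x i).
Proof.
move=> x y e; apply/ffunP=> j.
have := congr1 (fun f : cube n => f j) e; rewrite /= !ffunE.
by case: (x j); case: (y j); case: (j == i).
Qed.

Lemma point n (a b : cube n) : Majority a = ~~ Majority b ->
  (hh n (wt a) + hh n (wt b) <= 2 * dist a b)%N.
Proof.
rewrite /Majority /hh => e.
have h1 := wt_dist a b. have h2 := wt_dist b a. rewrite dist_sym in h2.
case: (ltnP n (2 * wt b)) e => hb; rewrite /= => e.
  have : ~~ (n < 2 * wt a)%N by rewrite e.
  rewrite -leqNgt => ha. lia.
have ha : (n < 2 * wt a)%N by rewrite e.
lia.
Qed.

Lemma sum_dist n (phi : {perm cube n}) i :
  is_mapping (@XOR n) (@Majority n) phi ->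
  (\sum_(y : cube n) hh n (wt y) <= \sum_(x : cube n) dist (phi x) (phi (flip x i)))%N.
Proof.
move=> hm.
have E1 : \sum_(x : cube n) hh n (wt (phi x)) = \sum_(y : cube n) hh n (wt y).
  by rewrite [RHS](reindex_inj (@perm_inj _ phi)).
have E2 : \sum_(x : cube n) hh n (wt (phi (flip x i))) = \sum_(y : cube n) hh n (wt y).
  by rewrite -E1 [RHS](reindex_inj (@flip_inj n i)).
have : (\sum_(x : cube n) (hh n (wt (phi x)) + hh n (wt (phi (flip x i))))
          <= \sum_(x : cube n) 2 * dist (phi x) (phi (flip x i)))%N.
  apply: leq_sum => x _; apply: point.
  by rewrite -!hm xor_flip negbK.
by rewrite big_split /= E1 E2 -big_distrr /= addnn -mul2n leq_pmul2l.
Qed.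

Unset Implicit Arguments.

Lemma natkey n (phi : {perm cube n}) i : odd n ->
  is_mapping (@XOR n) (@Majority n) phi ->
  (n * (2 ^ n) ^ 2 <= 4 * (\sum_(x : cube n) dist (phi x) (phi (flip x i))) ^ 2)%N.
Proof.
move=> hn hm.
have hs := sum_dist i hm.
set S := \sum_(x : cube n) dist _ _ in hs *.
have en : n = (n./2).*2.+1 by rewrite -[LHS]odd_double_half hn.
set m := n./2 in en.
rewrite (@sum_cube n (hh n)) in hs.
have : (2 * (n * 'C(m.*2, m)) <= S)%N.
  by have := sumH m; rewrite -en => <-.
move=> h2.
have hb := binbound m.
set C := 'C(m.*2, m) in h2 hb.
have e2 : (2 ^ n = 2 * 4 ^ m)%N by rewrite en expnS -mul2n expnM.
rewrite e2.
have e16 : (16 ^ m = (4 ^ m) ^ 2)%N by rewrite -expnM mulnC expnM.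
rewrite e16 in hb.
set P := (4 ^ m)%N in hb *.
apply: (@leq_trans (4 * (2 * (n * C)) ^ 2)); last by rewrite leq_mul2l leq_exp2r // h2 orbT.
have hn4 : (4 * m + 1 <= 4 * n)%N by rewrite en; lia.
have : (P ^ 2 <= C ^ 2 * (4 * n))%N by apply: leq_trans hb _; rewrite leq_mul2l hn4 orbT.
move=> h3.
have -> : (n * (2 * P) ^ 2 = 4 * n * P ^ 2)%N by ring.
have -> : (4 * (2 * (n * C)) ^ 2 = 4 * n * (C ^ 2 * (4 * n)))%N by ring.
by rewrite leq_mul2l h3 orbT.
Qed.

Local Open Scope ring_scope.

Theorem mainTheorem6 :
  exists c : rat, 0 < c /\
    forall (n : nat), odd n ->
    forall (phi : {perm cube n}), is_mapping (@XOR n) (@Majority n) phi ->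
    forall (i : 'I_n), c ^+ 2 * n%:R <= avg_stretch phi i ^+ 2.
Proof.
exists (1/2); split; first by [].
move=> n hn phi hm i.
have := @natkey n phi i hn hm.
rewrite -(ler_nat rat) !natrM !natrX => h.
rewrite /avg_stretch natrX.
set S := ((\sum_(x : cube n) _)%:R : rat) in h *.
set P := ((2 : rat) ^+ n) in h *.
set N := (n%:R : rat) in h *.
have hP : 0 < P by rewrite exprn_gt0.
rewrite [X in _ <= X]expr_div_n ler_pdivlMr ?exprn_gt0 //.
have e : (1 / 2 : rat) ^+ 2 = 1 / 4 by rewrite expr_div_n expr1n; congr (_ / _); rewrite expr2 -natrM.
rewrite e. rewrite !expr2 in h *. lra.
Qed.
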